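(* Let $I$ be a set and $P_i$ ($i\in I$) pastures, and let $\bigotimes_{i\in I}P_i$ and $i_j:P_j\to\bigotimes_{i\in I}P_i$ be as described in the context. Then $\bigotimes_{i\in I}P_i$ is a pasture, and for each $j\in I$ the map $i_j$ is a morphism of pastures.
   Context: A pasture is a multiplicative monoid $P$ with a zero element $0$ (absorbing) such that $P^\times=P\setminus\{0\}$ is an abelian group, together with an involution $x\mapsto -x$ fixing $0$, and a subset $N_P\subseteq P^3$ (write $a+b+c=0$ for $(a,b,c)\in N_P$) such that: (1) $N_P$ is invariant under permutations; (2) if $a+b+c=0$ then $da+db+dc=0$ for all $d\in P$; (3) $a+b+0=0$ iff $a=-b$. A morphism of pastures is a multiplicative map $f$ with $f(0)=0$, $f(1)=1$, $f(-a)=-f(a)$, preserving nullsets. The coproduct: let $\bigoplus_{i\in I}P_i^\times$ be the set of families $(x_i)_{i\in I}$ with $x_i\in P_i^\times$ and $x_i=1_i$ for all but finitely many $i$. Define $(x_i)\sim(y_i)$ iff there is a finite set of indices of even cardinality on which $x_i=-y_i$, with $x_i=y_i$ at all other indices (an equivalence relation). Set $\bigotimes_{i\in I}P_i=\{0\}\cup(\bigoplus_{i\in I}P_i^\times/\sim)$, classes written $[(x_i)_{i\in I}]$. Multiplication: $0$ absorbing, $[(x_i)][(y_i)]=[(x_iy_i)]$. Involution: $-0=0$ and $-[(x_i)]=[(y_i)]$ where $y_j=-x_j$ for one chosen index $j$ and $y_i=x_i$ for $i\neq j$. Nullset: for nonzero elements, $[(x_i)]+[(y_i)]+[(z_i)]=0$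 iff there are representatives $(x_i'),(y_i'),(z_i')$ of these classes and an index $j$ with $x'_j+y'_j+z'_j=0$ in $P_j$ and $x'_i=y'_i=z'_i$ for all $i\neq j$; relations involving $0$ are the permutations of $u+v+0=0$ iff $u=-v$. The maps: $i_j(0)=0$ and $i_j(x)=[(y_i)_{i\in I}]$ with $y_j=x$ and $y_i=1_i$ for $i\neq j$. *)

(* Defs.v *)
From Stdlib Require Import List Arith ClassicalEpsilon.
Import ListNotations.
Set Implicit Arguments.

(** Pasture axioms on raw data (carrier T, zero, one, multiplication,
    involution neg, nullset N : T -> T -> T -> Prop, where N a b c means
    a + b + c = 0). *)
Record pasture_axioms (T : Type) (zero one : T) (mul : T -> T -> T)
    (neg : T -> T) (N : T -> T -> T -> Prop) : Prop := {
  pa_mulA : forall x y z, mul x (mul y z) = mul (mul x y) z;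
  pa_mulC : forall x y, mul x y = mul y x;
  pa_mul1 : forall x, mul one x = x;
  pa_mul0 : forall x, mul zero x = zero;
  pa_one_neq0 : one <> zero;
  pa_mul_neq0 : forall x y, x <> zero -> y <> zero -> mul x y <> zero;
  pa_inv : forall x, x <> zero -> exists y, y <> zero /\ mul x y = one;
  pa_negK : forall x, neg (neg x) = x;
  pa_neg0 : neg zero = zero;
  pa_N_perm : forall a b c, N a b c ->
     N a c b /\ N b a c /\ N b c a /\ N c a b /\ N c b a;
  pa_N_mul : forall d a b c, N a b c -> N (mul d a) (mul d b) (mul d c);
  pa_N_zero : forall a b, N a b zero <-> a = neg b }.

Record pasture := Pasture {
  pcar :> Type;
  pzero : pcar;
  pone : pcar;
  pmul : pcar -> pcar -> pcar;
  pneg : pcar -> pcar;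
  pN : pcar -> pcar -> pcar -> Prop;
  pax : pasture_axioms pzero pone pmul pneg pN }.

Definition morphism_axioms (S T : Type)
    (z1 o1 : S) (m1 : S -> S -> S) (n1 : S -> S) (N1 : S -> S -> S -> Prop)
    (z2 o2 : T) (m2 : T -> T -> T) (n2 : T -> T) (N2 : T -> T -> T -> Prop)
    (f : S -> T) : Prop :=
  (forall x y, f (m1 x y) = m2 (f x) (f y)) /\
  f z1 = z2 /\ f o1 = o2 /\
  (forall a, f (n1 a) = n2 (f a)) /\
  (forall a b c, N1 a b c -> N2 (f a) (f b) (f c)).

Section Coprod.
Variable I : Type.
Variable P : I -> pasture.

Definition finsupp (x : forall i, pcar (P i)) : Prop :=
  exists l : list I, forall i, ~ In i l -> x i = pone (P i).

Definition Fam : Type :=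
  { x : forall i, pcar (P i) | (forall i, x i <> pzero (P i)) /\ finsupp x }.

Definition fam_equiv (x y : Fam) : Prop :=
  exists l : list I, NoDup l /\ Nat.even (length l) = true /\
    forall i, (In i l -> proj1_sig x i = pneg (P i) (proj1_sig y i)) /\
              (~ In i l -> proj1_sig x i = proj1_sig y i).

Definition cls (x : Fam) : Fam -> Prop := fun y => fam_equiv x y.

Definition Cls : Type := { C : Fam -> Prop | exists x, C = cls x }.

Definition class_of (x : Fam) : Cls := exist _ (cls x) (ex_intro _ x eq_refl).

Definition repr (C : Cls) : Fam :=
  proj1_sig (constructive_indefinite_description _ (proj2_sig C)).

(** the carrier: {0} together with the classes *)
Definition coprod : Type := option Cls.

Definition cp_zero : coprod := None.

Lemma fam_one_prop :
  (forall i, pone (P i) <> pzero (P i)) /\ finsupp (fun i => pone (P i)).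
Proof.
  split.
  - intro i; exact (pa_one_neq0 (pax (P i))).
  - exists nil; intros i _; reflexivity.
Qed.

Definition fam_one : Fam := exist _ (fun i => pone (P i)) fam_one_prop.

Definition cp_one : coprod := Some (class_of fam_one).

Lemma fam_mul_prop (x y : Fam) :
  (forall i, pmul (P i) (proj1_sig x i) (proj1_sig y i) <> pzero (P i)) /\
  finsupp (fun i => pmul (P i) (proj1_sig x i) (proj1_sig y i)).
Proof.
  destruct x as [x [hx [lx sx]]], y as [y [hy [ly sy]]]; simpl; split.
  - intro i; apply (pa_mul_neq0 (pax (P i))); auto.
  - exists (lx ++ ly); intros i hi.
    rewrite sx, sy.
    + apply (pa_mul1 (pax (P i))).
    + intro h; apply hi; apply in_or_app; right; exact h.
    + intro h; apply hi; apply in_or_app; left; exact h.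
Qed.

Definition fam_mul (x y : Fam) : Fam :=
  exist _ (fun i => pmul (P i) (proj1_sig x i) (proj1_sig y i)) (fam_mul_prop x y).

Definition cp_mul (a b : coprod) : coprod :=
  match a, b with
  | Some C, Some D => Some (class_of (fam_mul (repr C) (repr D)))
  | _, _ => None
  end.

Variable j0 : I. (* the chosen index used to define the involution *)

Definition flip_fun (x : Fam) : forall i, pcar (P i) :=
  fun i => if excluded_middle_informative (j0 = i)
           then pneg (P i) (proj1_sig x i) else proj1_sig x i.

Lemma fam_flip_prop (x : Fam) :
  (forall i, flip_fun x i <> pzero (P i)) /\ finsupp (flip_fun x).
Proof.
  destruct x as [x [hx [lx sx]]]; unfold flip_fun; simpl; split.
  - intro i; destruct (excluded_middle_informative (j0 = i)); auto.
    intro h; apply (hx i).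
    rewrite <- (pa_negK (pax (P i)) (x i)), h; apply (pa_neg0 (pax (P i))).
  - exists (j0 :: lx); intros i hi.
    destruct (excluded_middle_informative (j0 = i)) as [e|ne].
    + exfalso; apply hi; left; exact e.
    + apply sx; intro h; apply hi; right; exact h.
Qed.

Definition fam_flip (x : Fam) : Fam := exist _ (flip_fun x) (fam_flip_prop x).

Definition cp_neg (a : coprod) : coprod :=
  match a with
  | None => None
  | Some C => Some (class_of (fam_flip (repr C)))
  end.

Definition cp_N (a b c : coprod) : Prop :=
  match a, b, c with
  | Some A, Some B, Some C =>
      exists (x y z : Fam) (j : I),
        proj1_sig A x /\ proj1_sig B y /\ proj1_sig C z /\
        pN (P j) (proj1_sig x j) (proj1_sig y j) (proj1_sig z j) /\
        forall i, i <> j ->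
          proj1_sig x i = proj1_sig y i /\ proj1_sig y i = proj1_sig z i
  | _, _, _ =>
      (c = None /\ a = cp_neg b) \/ (b = None /\ a = cp_neg c) \/
      (a = None /\ b = cp_neg c)
  end.

Definition single_fun (j : I) (a : pcar (P j)) : forall i, pcar (P i) :=
  fun i => match excluded_middle_informative (j = i) with
           | left e => eq_rect j (fun k => pcar (P k)) a i e
           | right _ => pone (P i)
           end.

Lemma fam_single_prop (j : I) (a : pcar (P j)) (ha : a <> pzero (P j)) :
  (forall i, single_fun j a i <> pzero (P i)) /\ finsupp (single_fun j a).
Proof.
  unfold single_fun; split.
  - intro i; destruct (excluded_middle_informative (j = i)) as [e|ne].
    + destruct e; exact ha.
    + exact (pa_one_neq0 (pax (P i))).
  - exists [j]; intros i hi.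
    destruct (excluded_middle_informative (j = i)) as [e|ne].
    + exfalso; apply hi; left; exact e.
    + reflexivity.
Qed.

Definition fam_single (j : I) (a : pcar (P j)) (ha : a <> pzero (P j)) : Fam :=
  exist _ (single_fun j a) (@fam_single_prop j a ha).

Definition incl (j : I) (a : pcar (P j)) : coprod :=
  match excluded_middle_informative (a = pzero (P j)) with
  | left _ => None
  | right ha => Some (class_of (@fam_single j a ha))
  end.

End Coprod.

(* Main.v *)
Require Import Defs.
From Stdlib Require Import List Arith Lia ClassicalEpsilon Classical FunctionalExtensionality PropExtensionality ProofIrrelevance Permutation.
Import ListNotations.
Set Implicit Arguments.

Lemma pneg_is_mul (Q : pasture) (x : Q) : pneg Q x = pmul Q (pneg Q (pone Q)) x.
Proof.
  pose proof (pax Q) as A.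
  assert (N1 : pN Q (pone Q) (pneg Q (pone Q)) (pzero Q)).
  { apply (pa_N_zero A). rewrite (pa_negK A). reflexivity. }
  apply (pa_N_mul A x) in N1.
  rewrite (pa_mulC A x (pone Q)), (pa_mul1 A), (pa_mulC A x (pzero Q)), (pa_mul0 A) in N1.
  apply (pa_N_zero A) in N1. rewrite N1 at 1. rewrite (pa_negK A). apply (pa_mulC A).
Qed.

Lemma pneg_mul_l (Q : pasture) (x y : Q) : pmul Q (pneg Q x) y = pneg Q (pmul Q x y).
Proof.
  pose proof (pax Q) as A.
  rewrite (pneg_is_mul Q x), (pneg_is_mul Q (pmul Q x y)). symmetry; apply (pa_mulA A).
Qed.

Lemma pneg_mul_r (Q : pasture) (x y : Q) : pmul Q x (pneg Q y) = pneg Q (pmul Q x y).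
Proof.
  pose proof (pax Q) as A.
  rewrite (pa_mulC A), pneg_mul_l, (pa_mulC A). reflexivity.
Qed.

Lemma pneg_neq0 (Q : pasture) (x : Q) : x <> pzero Q -> pneg Q x <> pzero Q.
Proof.
  pose proof (pax Q) as A. intros h e; apply h.
  rewrite <- (pa_negK A x), e. apply (pa_neg0 A).
Qed.

Section S.
Variable I : Type.
Variable P : I -> pasture.

Definition memb (l : list I) (i : I) : bool :=
  if excluded_middle_informative (In i l) then true else false.

Lemma memb_spec l i : memb l i = true <-> In i l.
Proof. unfold memb; destruct excluded_middle_informative; split; intros; auto; discriminate. Qed.

Lemma memb_false l i : memb l i = false <-> ~ In i l.
Proof. unfold memb; destruct excluded_middle_informative; split; intros; auto; try discriminate; contradiction. Qed.

Lemma even_iff n : Nat.even n = true <-> exists m, n = 2 * m.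
Proof. rewrite Nat.even_spec. unfold Nat.Even. tauto. Qed.

Lemma symdiff (l1 l2 : list I) : NoDup l1 -> NoDup l2 ->
  Nat.even (length l1) = true -> Nat.even (length l2) = true ->
  exists l3, NoDup l3 /\ Nat.even (length l3) = true /\
    forall i, In i l3 <-> ((In i l1 /\ ~ In i l2) \/ (In i l2 /\ ~ In i l1)).
Proof.
  intros n1 n2 e1 e2.
  exists (filter (fun i => negb (memb l2 i)) l1 ++ filter (fun i => negb (memb l1 i)) l2).
  split; [|split].
  - apply NoDup_app; try apply NoDup_filter; auto.
    intros a h1 h2. apply filter_In in h1, h2.
    destruct h1 as [h1 h1'], h2 as [h2 h2'].
    apply Bool.negb_true_iff, memb_false in h1'. contradiction.
  - rewrite length_app.
    pose proof (filter_length (memb l2) l1) as f1.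
    pose proof (filter_length (memb l1) l2) as f2.
    assert (p : length (filter (memb l2) l1) = length (filter (memb l1) l2)).
    { apply Permutation_length, NoDup_Permutation; try apply NoDup_filter; auto.
      intro x; rewrite !filter_In, !memb_spec; tauto. }
    apply even_iff in e1, e2. apply even_iff. destruct e1 as [m1 e1], e2 as [m2 e2].
    exists (m1 + m2 - length (filter (memb l2) l1)). lia.
  - intro i. rewrite in_app_iff, !filter_In, !Bool.negb_true_iff, !memb_false. tauto.
Qed.

Definition fv (x : Fam P) := proj1_sig x.

Lemma fam_equiv_refl (x : Fam P) : fam_equiv x x.
Proof. exists nil; repeat split; auto using NoDup_nil; intros []. Qed.

Lemma fam_equiv_pw (x y : Fam P) : (forall i, proj1_sig x i = proj1_sig y i) -> fam_equiv x y.
Proof. intro h; exists nil; repeat split; auto using NoDup_nil; intros []. Qed.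

Lemma fam_equiv_sym x y : fam_equiv (P:=P) x y -> fam_equiv y x.
Proof.
  intros [l [n [e h]]]; exists l; repeat split; auto; intro hi; destruct (h i) as [h1 h2].
  - rewrite (h1 hi), (pa_negK (pax (P i))); reflexivity.
  - symmetry; auto.
Qed.

Lemma fam_equiv_trans x y z : fam_equiv (P:=P) x y -> fam_equiv y z -> fam_equiv x z.
Proof.
  intros [l1 [n1 [e1 h1]]] [l2 [n2 [e2 h2]]].
  destruct (symdiff n1 n2 e1 e2) as [l3 [n3 [e3 h3]]].
  exists l3; repeat split; auto; intro hi; rewrite h3 in hi;
  destruct (h1 i) as [a1 b1], (h2 i) as [a2 b2];
  destruct (classic (In i l1)), (classic (In i l2)); try tauto.
  - rewrite a1, b2; auto.
  - rewrite b1, a2; auto.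
  - rewrite a1, a2, (pa_negK (pax (P i))); auto.
  - rewrite b1, b2; auto.
Qed.

Lemma Cls_ext (C D : Cls P) : proj1_sig C = proj1_sig D -> C = D.
Proof.
  destruct C as [C pc], D as [D pd]; simpl; intro e; subst. f_equal; apply proof_irrelevance.
Qed.

Lemma class_eq x y : fam_equiv (P:=P) x y -> class_of x = class_of y.
Proof.
  intro h; apply Cls_ext; simpl. extensionality z; apply propositional_extensionality.
  unfold cls; split; intro k.
  - apply fam_equiv_trans with x; auto using fam_equiv_sym.
  - apply fam_equiv_trans with y; auto.
Qed.

Lemma repr_spec (C : Cls P) : proj1_sig C = cls (repr C).
Proof. unfold repr; destruct constructive_indefinite_description; simpl; auto. Qed.

Lemma class_repr (C : Cls P) : class_of (repr C) = C.
Proof. apply Cls_ext; simpl; symmetry; apply repr_spec. Qed.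

Lemma repr_class x : fam_equiv (P:=P) (repr (class_of x)) x.
Proof.
  pose proof (repr_spec (class_of x)) as h; simpl in h.
  change (cls (repr (class_of x)) x). rewrite <- h. apply fam_equiv_refl.
Qed.

Lemma Cls_surj (C : Cls P) : exists x, C = class_of x.
Proof. exists (repr C); symmetry; apply class_repr. Qed.

Lemma mul_resp_l x x' y : fam_equiv (P:=P) x x' -> fam_equiv (fam_mul x y) (fam_mul x' y).
Proof.
  intros [l [n [e h]]]; exists l; repeat split; auto; intro hi; destruct (h i) as [h1 h2]; simpl.
  - rewrite (h1 hi); apply pneg_mul_l.
  - rewrite (h2 hi); auto.
Qed.

Lemma mul_resp_r x y y' : fam_equiv (P:=P) y y' -> fam_equiv (fam_mul x y) (fam_mul x y').
Proof.
  intros [l [n [e h]]]; exists l; repeat split; auto; intro hi; destruct (h i) as [h1 h2]; simpl.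
  - rewrite (h1 hi); apply pneg_mul_r.
  - rewrite (h2 hi); auto.
Qed.

Lemma cls_mul x y : cp_mul (Some (class_of x)) (Some (class_of y)) = Some (class_of (fam_mul (P:=P) x y)).
Proof.
  simpl; f_equal; apply class_eq.
  apply fam_equiv_trans with (fam_mul x (repr (class_of y))).
  - apply mul_resp_l, repr_class.
  - apply mul_resp_r, repr_class.
Qed.


Variable j0 : I.

Lemma flip_pw (x : Fam P) i :
  proj1_sig (fam_flip j0 x) i = if excluded_middle_informative (j0 = i)
           then pneg (P i) (proj1_sig x i) else proj1_sig x i.
Proof. reflexivity. Qed.

Lemma flip_resp (x x' : Fam P) : fam_equiv x x' -> fam_equiv (fam_flip j0 x) (fam_flip j0 x').
Proof.
  intros [l [n [e h]]]; exists l; repeat split; auto; intro hi; destruct (h i) as [h1 h2];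
  rewrite !flip_pw; destruct excluded_middle_informative.
  - rewrite (h1 hi); auto.
  - auto.
  - rewrite (h2 hi); auto.
  - auto.
Qed.

Lemma cls_neg (x : Fam P) : cp_neg j0 (Some (class_of x)) = Some (class_of (fam_flip j0 x)).
Proof. simpl; f_equal; apply class_eq, flip_resp, repr_class. Qed.

Lemma cp_negK (a : coprod P) : cp_neg j0 (cp_neg j0 a) = a.
Proof.
  destruct a as [C|]; [|reflexivity].
  destruct (Cls_surj C) as [x ->]. rewrite !cls_neg. f_equal; apply class_eq, fam_equiv_pw.
  intro i; rewrite !flip_pw; destruct excluded_middle_informative; auto.
  apply (pa_negK (pax (P i))).
Qed.

Lemma cp_mul_neg (d b : coprod P) : cp_mul d (cp_neg j0 b) = cp_neg j0 (cp_mul d b).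
Proof.
  destruct d as [D|], b as [B|]; try reflexivity.
  destruct (Cls_surj D) as [x ->], (Cls_surj B) as [y ->].
  rewrite cls_neg, !cls_mul, cls_neg. f_equal; apply class_eq, fam_equiv_pw.
  intro i.
  change (pmul (P i) (proj1_sig x i) (proj1_sig (fam_flip j0 y) i) = proj1_sig (fam_flip j0 (fam_mul x y)) i).
  rewrite !flip_pw; destruct excluded_middle_informative; auto.
  apply pneg_mul_r.
Qed.

Lemma cp_mul_None_r (d : coprod P) : cp_mul d None = None.
Proof. destruct d; reflexivity. Qed.

Lemma N_mixed (a b c : coprod P) : (a = None \/ b = None \/ c = None) ->
  (cp_N j0 a b c <-> (c = None /\ a = cp_neg j0 b) \/ (b = None /\ a = cp_neg j0 c) \/
      (a = None /\ b = cp_neg j0 c)).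
Proof.
  intro h; destruct a, b, c; try (exfalso; intuition discriminate); simpl; tauto.
Qed.

Lemma N_some (x y z : Fam P) : cp_N j0 (Some (class_of x)) (Some (class_of y)) (Some (class_of z)) <->
  exists (x' y' z' : Fam P) (j : I),
        fam_equiv x x' /\ fam_equiv y y' /\ fam_equiv z z' /\
        pN (P j) (proj1_sig x' j) (proj1_sig y' j) (proj1_sig z' j) /\
        forall i, i <> j ->
          proj1_sig x' i = proj1_sig y' i /\ proj1_sig y' i = proj1_sig z' i.
Proof. reflexivity. Qed.

End S.

Section T.
Variable I : Type.
Variable P : I -> pasture.
Variable j0 : I.

Definition inv_fun (x : Fam P) (i : I) : pcar (P i) :=
  proj1_sig (constructive_indefinite_description _
     (pa_inv (pax (P i)) (proj1 (proj2_sig x) i))).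

Lemma inv_fun_spec (x : Fam P) i : inv_fun x i <> pzero (P i) /\ pmul (P i) (proj1_sig x i) (inv_fun x i) = pone (P i).
Proof. unfold inv_fun; destruct constructive_indefinite_description; simpl; auto. Qed.

Lemma fam_inv_prop (x : Fam P) : (forall i, inv_fun x i <> pzero (P i)) /\ finsupp P (inv_fun x).
Proof.
  split.
  - intro i; apply inv_fun_spec.
  - destruct (proj2 (proj2_sig x)) as [l hl]. exists l; intros i hi.
    destruct (inv_fun_spec x i) as [_ e]. rewrite (hl i hi), (pa_mul1 (pax (P i))) in e. exact e.
Qed.

Definition fam_inv (x : Fam P) : Fam P := exist _ (inv_fun x) (fam_inv_prop x).

Ltac clsd a := let C := fresh "C" in let x := fresh "x" in
  destruct a as [C|]; [destruct (Cls_surj C) as [x ->]|].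

Ltac cl := solve [reflexivity | rewrite cp_negK; reflexivity | simpl; reflexivity].
Ltac disj := first [left; split; cl | right; left; split; cl | right; right; split; cl].
Ltac nn := solve [intuition auto].

Lemma coprod_pasture : pasture_axioms (@cp_zero I P) (@cp_one I P) (@cp_mul I P)
                 (@cp_neg I P j0) (@cp_N I P j0).
Proof.
  constructor.
  - intros a b c; clsd a; clsd b; clsd c; try reflexivity.
    rewrite !cls_mul. f_equal; apply class_eq, fam_equiv_pw; intro i; simpl.
    apply (pa_mulA (pax (P i))).
  - intros a b; clsd a; clsd b; try reflexivity.
    rewrite !cls_mul. f_equal; apply class_eq, fam_equiv_pw; intro i; simpl.
    apply (pa_mulC (pax (P i))).
  - intros a; clsd a; try reflexivity. unfold cp_one.
    rewrite !cls_mul. f_equal; apply class_eq, fam_equiv_pw; intro i; simpl.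
    apply (pa_mul1 (pax (P i))).
  - reflexivity.
  - discriminate.
  - intros a b; clsd a; clsd b; try (intros; discriminate); intros; contradiction.
  - intros a; clsd a; [|intros; contradiction]. intros _.
    exists (Some (class_of (fam_inv x))); split; [discriminate|].
    unfold cp_one. rewrite !cls_mul. f_equal; apply class_eq, fam_equiv_pw; intro i; simpl.
    apply inv_fun_spec.
  - apply cp_negK.
  - reflexivity.
  - intros a b c H.
    destruct (classic (a = None \/ b = None \/ c = None)) as [hn|hn].
    + rewrite N_mixed in H by auto.
      rewrite !N_mixed by nn.
      destruct H as [[-> ->]|[[-> ->]|[-> ->]]]; repeat split; disj.
    + clsd a; [|nn]. clsd b; [|nn]. clsd c; [|nn].
      rewrite N_some in H |- *. rewrite !N_some.
      destruct H as (x' & y' & z' & j & h1 & h2 & h3 & hN & ho).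
      destruct (pa_N_perm (pax (P j)) _ _ _ hN) as (p1 & p2 & p3 & p4 & p5).
      repeat split.
      * exists x', z', y', j; repeat split; auto; try (match goal with H0 : _ <> j |- _ => destruct (ho _ H0) end; congruence).
      * exists y', x', z', j; repeat split; auto; try (match goal with H0 : _ <> j |- _ => destruct (ho _ H0) end; congruence).
      * exists y', z', x', j; repeat split; auto; try (match goal with H0 : _ <> j |- _ => destruct (ho _ H0) end; congruence).
      * exists z', x', y', j; repeat split; auto; try (match goal with H0 : _ <> j |- _ => destruct (ho _ H0) end; congruence).
      * exists z', y', x', j; repeat split; auto; try (match goal with H0 : _ <> j |- _ => destruct (ho _ H0) end; congruence).
  - intros d a b c H.
    destruct (classic (a = None \/ b = None \/ c = None)) as [hn|hn].
    + rewrite N_mixed in H by auto.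
      rewrite N_mixed by (destruct hn as [ -> | [ -> | -> ] ]; rewrite cp_mul_None_r; auto).
      destruct H as [[-> ->]|[[-> ->]|[-> ->]]]; rewrite ?cp_mul_neg, ?cp_mul_None_r; disj.
    + clsd a; [|nn]. clsd b; [|nn]. clsd c; [|nn].
      clsd d.
      * rewrite !cls_mul. rewrite N_some in H |- *.
        destruct H as (x' & y' & z' & j & h1 & h2 & h3 & hN & ho).
        exists (fam_mul x2 x'), (fam_mul x2 y'), (fam_mul x2 z'), j.
        repeat split; try (apply mul_resp_r; assumption).
        -- apply (pa_N_mul (pax (P j))); exact hN.
        -- simpl; destruct (ho i H) as [e1 e2]; congruence.
        -- simpl; destruct (ho i H) as [e1 e2]; congruence.
      * simpl; left; split; reflexivity.
  - intros a b; clsd a; clsd b; simpl; split; intro H; intuition (try discriminate; subst; auto).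
Qed.

End T.

Section U.
Variable I : Type.
Variable P : I -> pasture.
Variable j0 : I.

Lemma single_at (j : I) (a : P j) : @single_fun I P j a j = a.
Proof.
  unfold single_fun; destruct excluded_middle_informative as [e|n].
  - rewrite (proof_irrelevance _ e eq_refl); reflexivity.
  - contradiction.
Qed.

Lemma single_off (j : I) (a : P j) i : j <> i -> @single_fun I P j a i = pone (P i).
Proof. intro h; unfold single_fun; destruct excluded_middle_informative; [contradiction|reflexivity]. Qed.

Lemma incl_zero j : @Defs.incl I P j (pzero (P j)) = None.
Proof. unfold Defs.incl; destruct excluded_middle_informative; [reflexivity|contradiction]. Qed.

Lemma incl_nz j (a : P j) (ha : a <> pzero (P j)) : @Defs.incl I P j a = Some (class_of (@fam_single I P j a ha)).
Proof.
  unfold Defs.incl; destruct excluded_middle_informative; [contradiction|].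
  f_equal; apply class_eq, fam_equiv_pw; reflexivity.
Qed.

Lemma incl_neg j (a : P j) : @Defs.incl I P j (pneg (P j) a) = cp_neg j0 (@Defs.incl I P j a).
Proof.
  destruct (classic (a = pzero (P j))) as [->|ha].
  - rewrite (pa_neg0 (pax (P j))), incl_zero; reflexivity.
  - rewrite (incl_nz _ (@pneg_neq0 _ _ ha)), (incl_nz _ ha), cls_neg. f_equal; apply class_eq.
    destruct (classic (j = j0)) as [<-|hj].
    + apply fam_equiv_pw; intro i; rewrite flip_pw; simpl.
      destruct (classic (j = i)) as [<-|hi].
      * rewrite !single_at. destruct excluded_middle_informative; [reflexivity|contradiction].
      * rewrite !single_off by auto. destruct excluded_middle_informative; [contradiction|reflexivity].
    + exists [j; j0]; split; [|split; [reflexivity|]].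
      * constructor; [intros [h|[]]; congruence|]. constructor; [intros []|constructor].
      * intro i; split; intro hi; rewrite flip_pw; simpl.
        -- destruct hi as [<-|[<-|[]]].
           ++ rewrite !single_at. destruct excluded_middle_informative; [congruence|reflexivity].
           ++ rewrite !single_off by auto. destruct excluded_middle_informative; [|contradiction].
              symmetry; apply (pa_negK (pax (P j0))).
        -- assert (j <> i) by (intro; apply hi; left; auto).
           assert (j0 <> i) by (intro; apply hi; right; left; auto).
           rewrite !single_off by auto. destruct excluded_middle_informative; [contradiction|reflexivity].
Qed.

Lemma incl_morph j : morphism_axioms (pzero (P j)) (pone (P j)) (@pmul (P j)) (@pneg (P j)) (@pN (P j))
                    (@cp_zero I P) (@cp_one I P) (@cp_mul I P)
                    (@cp_neg I P j0) (@cp_N I P j0)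
                    (@Defs.incl I P j).
Proof.
  pose proof (pax (P j)) as A.
  split; [|split; [|split; [|split]]].
  - intros a b.
    destruct (classic (a = pzero (P j))) as [->|ha].
    { rewrite (pa_mul0 A), incl_zero; reflexivity. }
    destruct (classic (b = pzero (P j))) as [->|hb].
    { rewrite (pa_mulC A), (pa_mul0 A), incl_zero, cp_mul_None_r; reflexivity. }
    rewrite (incl_nz _ (pa_mul_neq0 A ha hb)), (incl_nz _ ha), (incl_nz _ hb), cls_mul.
    f_equal; apply class_eq, fam_equiv_pw; intro i; simpl.
    destruct (classic (j = i)) as [<-|hi].
    + rewrite !single_at; reflexivity.
    + rewrite !single_off by auto. symmetry; apply (pa_mul1 (pax (P i))).
  - apply incl_zero.
  - rewrite (incl_nz _ (pa_one_neq0 A)). unfold cp_one. f_equal; apply class_eq, fam_equiv_pw; intro i; simpl.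
    destruct (classic (j = i)) as [<-|hi].
    + rewrite !single_at; reflexivity.
    + rewrite !single_off by auto; reflexivity.
  - apply incl_neg.
  - intros a b c H.
    destruct (classic (c = pzero (P j))) as [->|hc].
    { rewrite incl_zero, N_mixed by auto. left; split; [reflexivity|].
      apply (pa_N_zero A) in H; rewrite H; apply incl_neg. }
    destruct (classic (b = pzero (P j))) as [->|hb].
    { rewrite incl_zero, N_mixed by auto. right; left; split; [reflexivity|].
      apply (pa_N_perm A) in H; destruct H as [H _].
      apply (pa_N_zero A) in H; rewrite H; apply incl_neg. }
    destruct (classic (a = pzero (P j))) as [->|ha].
    { rewrite incl_zero, N_mixed by auto. right; right; split; [reflexivity|].
      apply (pa_N_perm A) in H; destruct H as (_ & _ & H & _).
      apply (pa_N_zero A) in H; rewrite H; apply incl_neg. }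
    rewrite (incl_nz _ ha), (incl_nz _ hb), (incl_nz _ hc), N_some.
    exists (@fam_single I P j a ha), (@fam_single I P j b hb), (@fam_single I P j c hc), j.
    repeat split; try apply fam_equiv_refl.
    + simpl; rewrite !single_at; exact H.
    + simpl; rewrite !single_off by auto; reflexivity.
    + simpl; rewrite !single_off by auto; reflexivity.
Qed.

End U.

Import Defs.

Theorem lemma7p3 (I : Type) (P : I -> pasture) (j0 : I) :
  pasture_axioms (@cp_zero I P) (@cp_one I P) (@cp_mul I P)
                 (@cp_neg I P j0) (@cp_N I P j0) /\
  forall j : I,
    morphism_axioms (pzero (P j)) (pone (P j)) (@pmul (P j)) (@pneg (P j)) (@pN (P j))
                    (@cp_zero I P) (@cp_one I P) (@cp_mul I P)
                    (@cp_neg I P j0) (@cp_N I P j0)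
                    (@Defs.incl I P j).
Proof.
  split; [apply coprod_pasture | intro j; apply incl_morph].
Qed.
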